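(* Let $(V_4,g)$ be a space-time whose Ricci tensor $R$ is of non-null electromagnetic type and whose Weyl tensor $W$ is of Petrov–Bel type D. Then $R$ and $W$ have aligned (i.e. coinciding) principal planes if and only if $$a\neq0,\qquad R^{\mu}{}_{(\lambda}\mathcal P_{\nu)\mu\gamma\delta}=0,\qquad \mathcal P\equiv\mathcal W+\frac ba\mathcal G,$$ where $\mathcal W=\frac12(W-i*W)$ is the self-dual Weyl tensor, $a=\mathrm{Tr}\mathcal W^2$, $b=\mathrm{Tr}\mathcal W^3$.
   Context: Signature $(-,+,+,+)$; curvature conventions as in Kramer et al. Round brackets on indices denote symmetrization. For double 2-forms, $(P\circ Q)^{\alpha\beta}{}_{\rho\sigma}=\frac12P^{\alpha\beta}{}_{\mu\nu}Q^{\mu\nu}{}_{\rho\sigma}$, $P^2=P\circ P$, $\mathrm{Tr}P=\frac12P^{\alpha\beta}{}_{\alpha\beta}$; $*W=\eta\circ W$ with $\eta$ the volume element; $G=\frac12g\wedge g$ with $(A\wedge B)_{\alpha\beta\mu\nu}=A_{\alpha\mu}B_{\beta\nu}+A_{\beta\nu}B_{\alpha\mu}-A_{\alpha\nu}B_{\beta\mu}-A_{\beta\mu}B_{\alpha\nu}$; $\mathcal G=\frac12(G-i\eta)$. $R$ is of non-null electromagnetic type if $R=-\kappa\Pi$ where $\kappa>0$ and $\Pi=v-h$, with $v=U^2$, $h=-( *U)^2$ for a simple unit 2-form $U$ (equivalently $\mathrm{tr}R=0$, $4R^2=(\mathrm{tr}R^2)g\neq0$, $R(x,x)>0$ for time-like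 $x$); its principal planes are the time-like plane $V$ with volume element $U$ and its orthogonal complement $H$. $W$ is of Petrov–Bel type D if $\mathcal W=3\rho\,\mathcal U\otimes\mathcal U+\rho\mathcal G$ with $\rho=-b/a$ and $\mathcal U=\frac1{\sqrt2}(U'-i*U')$ a normalized self-dual bivector ($U'$ a simple unit 2-form); its principal planes are the time-like plane with volume element $U'$ and its orthogonal complement. *)

(* Defs.v *)
(* Pointwise (tangent-space) formalization. *)
From HB Require Import structures.
From mathcomp Require Import all_boot all_order all_algebra.
From mathcomp Require Import complex.
Set Implicit Arguments. Unset Strict Implicit. Unset Printing Implicit Defensive.
Import Order.TTheory GRing.Theory Num.Theory.
Local Open Scope ring_scope.

(* Tensors at a point, components in a coordinate basis, ALL INDICES DOWN. *)
Definition tensor2 (F : Type) := 'I_4 -> 'I_4 -> F.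
Definition tensor4 (F : Type) := 'I_4 -> 'I_4 -> 'I_4 -> 'I_4 -> F.

Section Generic.
Variable F : fieldType.
Variable gi : 'I_4 -> 'I_4 -> F.  (* inverse metric g^{ab} *)

Definition dcomp (P Q : tensor4 F) : tensor4 F := fun a b r s =>
  2^-1 * \sum_(m < 4) \sum_(n < 4) \sum_(m' < 4) \sum_(n' < 4)
     P a b m n * gi m m' * gi n n' * Q m' n' r s.

Definition dtr (P : tensor4 F) : F :=
  2^-1 * \sum_(a < 4) \sum_(b < 4) \sum_(a' < 4) \sum_(b' < 4)
     gi a a' * gi b b' * P a' b' a b.

Definition kwedge (A B : tensor2 F) : tensor4 F := fun a b m n =>
  A a m * B b n + A b n * B a m - A a n * B b m - A b m * B a n.

Definition otimes2 (U V : tensor2 F) : tensor4 F := fun a b c d => U a b * V c d.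

Definition fsq (U : tensor2 F) : tensor2 F := fun a b =>
  \sum_(m < 4) \sum_(n < 4) U a m * gi m n * U n b.

Definition ip2 (U V : tensor2 F) : F :=
  \sum_(a < 4) \sum_(b < 4) \sum_(a' < 4) \sum_(b' < 4)
     U a b * gi a a' * gi b b' * V a' b'.

Definition hodge2 (eta : tensor4 F) (U : tensor2 F) : tensor2 F := fun a b =>
  2^-1 * \sum_(m < 4) \sum_(n < 4) \sum_(m' < 4) \sum_(n' < 4)
     eta a b m n * gi m m' * gi n n' * U m' n'.

(* Levi-Civita symbol, eps_{0123} = 1 *)
Definition eps (a b c d : 'I_4) : F :=
  \det (\matrix_(r < 4, k < 4) ((nth ord0 [:: a; b; c; d] r == k)%:R : F)).
End Generic.

Section Phys.
Variable R : rcfType.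
Local Notation C := R[i].
Local Open Scope complex_scope.

Definition ginv (g : 'M[R]_4) : 'I_4 -> 'I_4 -> R := fun a b => invmx g a b.
Definition gten (g : 'M[R]_4) : tensor2 R := fun a b => g a b.

Definition lorentzian (g : 'M[R]_4) : Prop :=
  g^T = g /\ exists E : 'M[R]_4,
    E^T *m g *m E = diag_mx (\row_(i < 4) (if i == ord0 then -1 else 1)).

Definition vol (g : 'M[R]_4) : tensor4 R := fun a b c d =>
  Num.sqrt (- \det g) * eps R a b c d.

Definition liftT2 (T : tensor2 R) : tensor2 C := fun a b => (T a b)%:C.
Definition liftT4 (T : tensor4 R) : tensor4 C := fun a b c d => (T a b c d)%:C.
Definition ginvC (g : 'M[R]_4) : 'I_4 -> 'I_4 -> C := fun a b => (ginv g a b)%:C.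

Definition Gten (g : 'M[R]_4) : tensor4 R := fun a b m n =>
  2^-1 * kwedge (gten g) (gten g) a b m n.
Definition calG (g : 'M[R]_4) : tensor4 C := fun a b m n =>
  2^-1 * ((Gten g a b m n)%:C - 'i * (vol g a b m n)%:C).

Definition dstar (g : 'M[R]_4) (W : tensor4 R) : tensor4 R :=
  dcomp (ginv g) (vol g) W.

Definition selfdual (g : 'M[R]_4) (W : tensor4 R) : tensor4 C := fun a b c d =>
  2^-1 * ((W a b c d)%:C - 'i * (dstar g W a b c d)%:C).

Definition inv_a (g : 'M[R]_4) (W : tensor4 R) : C :=
  let cW := selfdual g W in dtr (ginvC g) (dcomp (ginvC g) cW cW).
Definition inv_b (g : 'M[R]_4) (W : tensor4 R) : C :=
  let cW := selfdual g W in
  dtr (ginvC g) (dcomp (ginvC g) cW (dcomp (ginvC g) cW cW)).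

Definition simple2 (U : tensor2 R) : Prop :=
  exists u v : 'I_4 -> R, forall a b, U a b = u a * v b - u b * v a.

(* simple unit 2-form of a time-like plane: U_{ab} U^{ab} = -2 *)
Definition timelike_unit2 (g : 'M[R]_4) (U : tensor2 R) : Prop :=
  simple2 U /\ ip2 (ginv g) U U = -2.

(* Ric = - kappa Pi, Pi = v - h, v = U^2, h = -( *U)^2 *)
Definition em_data (g : 'M[R]_4) (Ric : tensor2 R) (kappa : R) (U : tensor2 R) :=
  0 < kappa /\ timelike_unit2 g U /\
  forall a b, Ric a b =
    - kappa * (fsq (ginv g) U a b
               - (- fsq (ginv g) (hodge2 (ginv g) (vol g) U) a b)).

Definition nonnull_em (g : 'M[R]_4) (Ric : tensor2 R) : Prop :=
  exists kappa U, em_data g Ric kappa U.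

Definition typeD_data (g : 'M[R]_4) (W : tensor4 R) (U' : tensor2 R) : Prop :=
  let a := inv_a g W in
  let b := inv_b g W in
  let rho := - b / a in
  let cU : tensor2 C := fun m n =>
    ((Num.sqrt 2)%:C)^-1 *
      ((U' m n)%:C - 'i * (hodge2 (ginv g) (vol g) U' m n)%:C) in
  a != 0 /\ timelike_unit2 g U' /\
  forall p q r s, selfdual g W p q r s =
     3%:R * rho * otimes2 cU cU p q r s + rho * calG g p q r s.

Definition typeD (g : 'M[R]_4) (W : tensor4 R) : Prop :=
  exists U', typeD_data g W U'.

(* the 2-plane with (simple) volume element U : vectors x with x_flat /\ U = 0 *)
Definition plane_of (g : 'M[R]_4) (U : tensor2 R) (x : 'I_4 -> R) : Prop :=
  let xl := fun a => \sum_(m < 4) g a m * x m in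
  forall a b c, xl a * U b c + xl b * U c a + xl c * U a b = 0.

Definition orth (g : 'M[R]_4) (P : ('I_4 -> R) -> Prop) (x : 'I_4 -> R) : Prop :=
  forall y, P y -> \sum_(a < 4) \sum_(b < 4) g a b * x a * y b = 0.

(* principal planes of Ric (V, H) and of W coincide *)
Definition aligned (g : 'M[R]_4) (Ric : tensor2 R) (W : tensor4 R) : Prop :=
  exists kappa U U', em_data g Ric kappa U /\ typeD_data g W U' /\
    (forall x, plane_of g U x <-> plane_of g U' x) /\
    (forall x, orth g (plane_of g U) x <-> orth g (plane_of g U') x).

Definition weyl_alg (g : 'M[R]_4) (W : tensor4 R) : Prop :=
  (forall a b c d, W a b c d = - W b a c d) /\
  (forall a b c d, W a b c d = - W a b d c) /\
  (forall a b c d, W a b c d = W c d a b) /\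
  (forall a b c d, W a b c d + W a c d b + W a d b c = 0) /\
  (forall b d, \sum_(a < 4) \sum_(c < 4) ginv g a c * W a b c d = 0).

Definition sym2 (T : tensor2 R) : Prop := forall a b, T a b = T b a.

Definition calP (g : 'M[R]_4) (W : tensor4 R) : tensor4 C := fun p q r s =>
  selfdual g W p q r s + inv_b g W / inv_a g W * calG g p q r s.

Definition RP_sym (g : 'M[R]_4) (Ric : tensor2 R) (W : tensor4 R) (l n c d : 'I_4) : C :=
  2^-1 * \sum_(m < 4) \sum_(k < 4)
     (ginvC g m k * (Ric k l)%:C * calP g W n m c d
      + ginvC g m k * (Ric k n)%:C * calP g W l m c d).

End Phys.

(* Main.v *)
Require Import Defs.
From HB Require Import structures.
From mathcomp Require Import all_boot all_order all_algebra.
From mathcomp Require Import complex.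
From mathcomp Require Import perm ring lra.
From Stdlib Require Import FunctionalExtensionality.
Set Implicit Arguments. Unset Strict Implicit. Unset Printing Implicit Defensive.
Import Order.TTheory GRing.Theory Num.Theory.
Local Open Scope ring_scope.

(* Proof of lemma4 via an orthonormal frame E given by lorentzian g. *)

Definition i0 : 'I_4 := @Ordinal 4 0 isT.
Definition i1 : 'I_4 := @Ordinal 4 1 isT.
Definition i2 : 'I_4 := @Ordinal 4 2 isT.
Definition i3 : 'I_4 := @Ordinal 4 3 isT.

Lemma ord4P (P : 'I_4 -> Prop) : P i0 -> P i1 -> P i2 -> P i3 -> forall i, P i.
Proof.
move=> H0 H1 H2 H3 [[|[|[|[|k]]]] Hk].
- by rewrite (_ : Ordinal Hk = i0) //; apply: val_inj.
- by rewrite (_ : Ordinal Hk = i1) //; apply: val_inj.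
- by rewrite (_ : Ordinal Hk = i2) //; apply: val_inj.
- by rewrite (_ : Ordinal Hk = i3) //; apply: val_inj.
- by [].
Qed.

Lemma sum4 (V : nmodType) (F : 'I_4 -> V) : \sum_(i < 4) F i = F i0 + F i1 + F i2 + F i3.
Proof.
rewrite !big_ord_recr big_ord0 /=. rewrite add0r.
by congr (F _ + F _ + F _ + F _); apply: val_inj.
Qed.

Lemma prod4 (K : comNzRingType) (F : 'I_4 -> K) : \prod_(i < 4) F i = F i0 * F i1 * F i2 * F i3.
Proof.
rewrite !big_ord_recr big_ord0 /=. rewrite mul1r.
by congr (F _ * F _ * F _ * F _); apply: val_inj.
Qed.

Section Eps.
Variable F : fieldType.

Definition Sel (a b c d : 'I_4) : 'M[F]_4 :=
  \matrix_(r < 4, k < 4) ((nth ord0 [:: a; b; c; d] r == k)%:R : F).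

Lemma epsSel a b c d : eps F a b c d = \det (Sel a b c d).
Proof. by []. Qed.

Lemma xrowSel (x y : 'I_4) a b c d (A : 'M[F]_4) :
  x != y -> A = xrow x y (Sel a b c d) -> \det A = - eps F a b c d.
Proof.
move=> xy ->; rewrite xrowE det_mulmx det_perm odd_tperm xy expr1 mulN1r.
by [].
Qed.

Lemma eps_sw01 a b c d : eps F b a c d = - eps F a b c d.
Proof.
apply: (@xrowSel i0 i1) => //; apply/matrixP => r k; rewrite !mxE.
by elim/ord4P: r; rewrite ?tpermL ?tpermR ?tpermD.
Qed.
Lemma eps_sw12 a b c d : eps F a c b d = - eps F a b c d.
Proof.
apply: (@xrowSel i1 i2) => //; apply/matrixP => r k; rewrite !mxE.
by elim/ord4P: r; rewrite ?tpermL ?tpermR ?tpermD.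
Qed.
Lemma eps_sw23 a b c d : eps F a b d c = - eps F a b c d.
Proof.
apply: (@xrowSel i2 i3) => //; apply/matrixP => r k; rewrite !mxE.
by elim/ord4P: r; rewrite ?tpermL ?tpermR ?tpermD.
Qed.

Lemma eps_rep a b c d : ~~ uniq [:: a; b; c; d] -> eps F a b c d = 0.
Proof.
move=> H.
have alt (x y : 'I_4) : x != y -> (forall k, Sel a b c d x k = Sel a b c d y k) -> eps F a b c d = 0.
  by move=> xy e; rewrite epsSel; apply: (determinant_alternate xy) => k; apply: e.
case: (eqVneq a b) => [e|ab]; first by apply: (alt i0 i1) => // k; rewrite !mxE /= e.
case: (eqVneq a c) => [e|ac]; first by apply: (alt i0 i2) => // k; rewrite !mxE /= e.
case: (eqVneq a d) => [e|ad]; first by apply: (alt i0 i3) => // k; rewrite !mxE /= e.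
case: (eqVneq b c) => [e|bc]; first by apply: (alt i1 i2) => // k; rewrite !mxE /= e.
case: (eqVneq b d) => [e|bd]; first by apply: (alt i1 i3) => // k; rewrite !mxE /= e.
case: (eqVneq c d) => [e|cd]; first by apply: (alt i2 i3) => // k; rewrite !mxE /= e.
by move: H; rewrite /= !inE !negb_or ab ac ad bc bd cd.
Qed.

Lemma eps0123 : eps F i0 i1 i2 i3 = 1.
Proof.
rewrite epsSel (_ : Sel _ _ _ _ = 1%:M) ?det1 //.
apply/matrixP => r k; rewrite !mxE; elim/ord4P: r => /=; by [].
Qed.
End Eps.

Definition epsn (a b c d : nat) : nat :=
  if [&& a != b, a != c, a != d, b != c, b != d & c != d]%N then
    (if odd ((b < a) + (c < a) + (d < a) + (c < b) + (d < b) + (d < c))%N then 2 else 1)%N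
  else 0%N.
Definition epsv (F : fieldType) (a b c d : 'I_4) : F :=
  match epsn a b c d with 0%N => 0 | 1%N => 1 | _ => -1 end.

Ltac epsort := repeat first [
  rewrite (@eps_sw01 _ i0 i1) | rewrite (@eps_sw01 _ i0 i2) | rewrite (@eps_sw01 _ i0 i3)
| rewrite (@eps_sw01 _ i1 i2) | rewrite (@eps_sw01 _ i1 i3) | rewrite (@eps_sw01 _ i2 i3)
| rewrite (@eps_sw12 _ _ i0 i1) | rewrite (@eps_sw12 _ _ i0 i2) | rewrite (@eps_sw12 _ _ i0 i3)
| rewrite (@eps_sw12 _ _ i1 i2) | rewrite (@eps_sw12 _ _ i1 i3) | rewrite (@eps_sw12 _ _ i2 i3)
| rewrite (@eps_sw23 _ _ _ i0 i1) | rewrite (@eps_sw23 _ _ _ i0 i2) | rewrite (@eps_sw23 _ _ _ i0 i3)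
| rewrite (@eps_sw23 _ _ _ i1 i2) | rewrite (@eps_sw23 _ _ _ i1 i3) | rewrite (@eps_sw23 _ _ _ i2 i3) ].

Lemma epsE (F : fieldType) a b c d : eps F a b c d = epsv F a b c d.
Proof.
elim/ord4P: a; elim/ord4P: b; elim/ord4P: c; elim/ord4P: d; rewrite /epsv /=;
  first [ by rewrite eps_rep | (epsort; rewrite eps0123 ?opprK //) ].
Qed.

Lemma delta4 (V : comNzRingType) (G : 'I_4 -> V) j : \sum_(i < 4) (i == j)%:R * G i = G j.
Proof.
rewrite (bigD1 j) //= eqxx mul1r big1 ?addr0 // => i /negbTE ->; by rewrite mul0r.
Qed.

Lemma detML (F : fieldType) (B : 'M[F]_4) : \det B =
  \sum_a \sum_b \sum_c \sum_d eps F a b c d * B i0 a * B i1 b * B i2 c * B i3 d.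
Proof.
symmetry.
under eq_bigr => a _ do under eq_bigr => b _ do under eq_bigr => c _ do
  under eq_bigr => d _ do rewrite epsSel /determinant !big_distrl.
under eq_bigr => a _ do under eq_bigr => b _ do under eq_bigr => c _ do rewrite exchange_big.
under eq_bigr => a _ do under eq_bigr => b _ do rewrite exchange_big.
under eq_bigr => a _ do rewrite exchange_big.
rewrite exchange_big /=; apply: eq_bigr => s _.
set sg := (-1) ^+ s.
transitivity (\sum_(a < 4) (a == s i0)%:R * \sum_(b < 4) (b == s i1)%:R *
   \sum_(c < 4) (c == s i2)%:R * \sum_(d < 4) (d == s i3)%:R *
   (sg * B i0 a * B i1 b * B i2 c * B i3 d)).
  apply: eq_bigr => a _; rewrite big_distrr /=; apply: eq_bigr => b _.
  rewrite !big_distrr /=; apply: eq_bigr => c _.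
  rewrite !big_distrr /=; apply: eq_bigr => d _.
  rewrite prod4 !mxE /=.
  move: ((a == s i0)%:R) ((b == s i1)%:R) ((c == s i2)%:R) ((d == s i3)%:R) => x y z w.
  ring.
rewrite delta4 delta4 delta4 delta4 prod4; ring.
Qed.

Lemma epsML (F : fieldType) (A : 'M[F]_4) i j k l :
  \sum_a \sum_b \sum_m \sum_n eps F a b m n * A a i * A b j * A m k * A n l
  = \det A * eps F i j k l.
Proof.
have HB r x : (Sel F i j k l *m A^T) r x = A x (nth ord0 [:: i; j; k; l] r).
  rewrite !mxE; under eq_bigr => y _ do rewrite !mxE eq_sym.
  by rewrite delta4.
have := detML (Sel F i j k l *m A^T).
rewrite det_mulmx det_tr -epsSel mulrC => ->.
by apply: eq_bigr => a _; apply: eq_bigr => b _; apply: eq_bigr => m _;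
  apply: eq_bigr => n _; rewrite !HB.
Qed.


Section Frame.
Variable R : rcfType.
Notation M := ('I_4 -> 'I_4 -> R).

Definition mulF (A B : M) : M := fun i j =>
  A i i0 * B i0 j + A i i1 * B i1 j + A i i2 * B i2 j + A i i3 * B i3 j.
Definition Dd (i : 'I_4) : R := if (val i == 0)%N then -1 else 1.
Definition mD (A : M) : M := fun i j => A i j * Dd j.
Definition Dl (A : M) : M := fun i j => Dd i * A i j.
Definition trf (A : M) : R := A i0 i0 + A i1 i1 + A i2 i2 + A i3 i3.
Definition wedgef (u v : 'I_4 -> R) : M := fun i j => u i * v j - u j * v i.
Definition hodgeX (Y : M) : M := fun i j =>
  match nat_of_ord i, nat_of_ord j with
  | 0, 1 => Y i2 i3 | 1, 0 => - Y i2 i3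
  | 0, 2 => - Y i1 i3 | 2, 0 => Y i1 i3
  | 0, 3 => Y i1 i2 | 3, 0 => - Y i1 i2
  | 1, 2 => - Y i0 i3 | 2, 1 => Y i0 i3
  | 1, 3 => Y i0 i2 | 3, 1 => - Y i0 i2
  | 2, 3 => - Y i0 i1 | 3, 2 => Y i0 i1
  | _, _ => 0 end.

Ltac unf := rewrite /mulF /mD /Dl /trf /wedgef /hodgeX /Dd /=.

Lemma G1f u v i j : mulF (mD (wedgef u v)) (hodgeX (wedgef u v)) i j = 0.
Proof. elim/ord4P: i; elim/ord4P: j; unf; ring. Qed.

Lemma G2f u v i j : let U := wedgef u v in let S := hodgeX U in
  mulF (mD U) U i j - mulF (mD S) S i j =
  2^-1 * trf (mulF (mD (Dl U)) U) * (if i == j then Dd i else 0).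
Proof. elim/ord4P: i; elim/ord4P: j; unf; field; done. Qed.

Ltac asym hX := rewrite ?(hX i0 i1) ?(hX i0 i2) ?(hX i0 i3) ?(hX i1 i2) ?(hX i1 i3) ?(hX i2 i3).

Lemma G3f u v (X : M) i j : (forall a b, X b a = - X a b) ->
  let S := hodgeX (wedgef u v) in
  mulF (mD (mulF (mD S) X)) S i j = 2^-1 * trf (mulF (mD (Dl X)) S) * S i j.
Proof.
move=> hX; have hX0 a : X a a = 0.
  by have := hX a a; lra.
elim/ord4P: i; elim/ord4P: j; unf; rewrite ?hX0; asym hX; field; done.
Qed.

Lemma G4f u v (X : M) i j : (forall a b, X b a = - X a b) ->
  let U := wedgef u v in
  mulF (mD (mulF (mD U) X)) U i j = 2^-1 * trf (mulF (mD (Dl X)) U) * U i j.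
Proof.
move=> hX; have hX0 a : X a a = 0.
  by have := hX a a; lra.
elim/ord4P: i; elim/ord4P: j; unf; rewrite ?hX0; asym hX; field; done.
Qed.
End Frame.


Section Gen.
Variable R : rcfType.
Notation Dm := (diag_mx (\row_(i < 4) (if i == ord0 then -1 else 1)) : 'M[R]_4).
Variables (g E : 'M[R]_4).
Hypothesis gsym : g^T = g.
Hypothesis hE : E^T *m g *m E = Dm.

Lemma detDm : \det Dm = -1.
Proof. by rewrite det_diag prod4 !mxE /=; ring. Qed.

Lemma DmDm : Dm *m Dm = 1%:M.
Proof.
apply/matrixP => i j; rewrite mul_diag_mx !mxE; elim/ord4P: i => /=;
 case: (_ == j) => /=; rewrite ?mulr1n ?mulr0n ?mulr0 //; ring.
Qed.

Lemma detEg : \det E ^+ 2 * \det g = -1.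
Proof. by rewrite -detDm -hE !det_mulmx det_tr; ring. Qed.

Lemma detE_neq0 : \det E != 0.
Proof. apply/eqP => h; have := detEg; rewrite h; lra. Qed.

Lemma detg_lt0 : \det g < 0.
Proof.
have := detEg; have := sqr_ge0 (\det E); nra.
Qed.

Lemma g_unit : g \in unitmx.
Proof. by rewrite unitmxE unitfE; apply/eqP => h; have := detg_lt0; rewrite h ltxx. Qed.

Lemma E_unit : E \in unitmx.
Proof. by rewrite unitmxE unitfE detE_neq0. Qed.

Lemma Et_unit : E^T \in unitmx.
Proof. by rewrite unitmxE det_tr unitfE detE_neq0. Qed.

Lemma Gi_E : invmx g = E *m Dm *m E^T.
Proof.
have h1 : E *m Dm *m E^T *m g = 1%:M.
  rewrite -[LHS](mulmxK E_unit) -[RHS](mulmxK E_unit); congr (_ *m _).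
  by rewrite -!mulmxA [E^T *m _]mulmxA hE DmDm mulmx1 mul1mx.
by rewrite -[RHS](mulmxK g_unit) h1 mul1mx.
Qed.

Lemma Gi_sym : (invmx g)^T = invmx g.
Proof. by rewrite trmx_inv gsym. Qed.

Definition sig := Num.sqrt (- \det g) * \det E.
Lemma sig2 : sig ^+ 2 = 1.
Proof.
rewrite /sig exprMn sqr_sqrtr; last by have := detg_lt0; lra.
by have := detEg; lra.
Qed.

Lemma distr (ep : 'I_4 -> 'I_4 -> 'I_4 -> 'I_4 -> R) (Z : 'M[R]_4) i j :
  \sum_b (\sum_a E^T i a * (\sum_m \sum_n ep a b m n * (E *m Z *m E^T) m n)) * E b j
  = \sum_l \sum_k (\sum_a \sum_b \sum_m \sum_n
   ep a b m n * E a i * E b j * E m k * E n l) * Z k l.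
Proof.
transitivity (\sum_b \sum_a \sum_m \sum_n \sum_l \sum_k
   (ep a b m n * E a i * E b j * E m k * E n l) * Z k l).
  apply: eq_bigr => b _; rewrite big_distrl /=; apply: eq_bigr => a _.
  rewrite big_distrr big_distrl /=; apply: eq_bigr => m _.
  rewrite big_distrr big_distrl /=; apply: eq_bigr => n _.
  rewrite !mxE big_distrr /= big_distrr /= big_distrl /=; apply: eq_bigr => l _.
  rewrite !mxE; do 3 rewrite ?big_distrl ?big_distrr /=; apply: eq_bigr => k _.
  ring.
under eq_bigr => a _ do under eq_bigr => b _ do under eq_bigr => m _ do rewrite exchange_big.
under eq_bigr => a _ do under eq_bigr => b _ do under eq_bigr => m _ do
  under eq_bigr => l _ do rewrite exchange_big.
under eq_bigr => a _ do under eq_bigr => b _ do rewrite exchange_big.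
under eq_bigr => a _ do under eq_bigr => b _ do under eq_bigr => l _ do rewrite exchange_big.
under eq_bigr => a _ do rewrite exchange_big.
under eq_bigr => a _ do under eq_bigr => l _ do rewrite exchange_big.
rewrite exchange_big.
under eq_bigr => l _ do rewrite exchange_big.
apply: eq_bigr => l _; apply: eq_bigr => k _; rewrite exchange_big big_distrl /=.
apply: eq_bigr => a _; rewrite big_distrl /=; apply: eq_bigr => b _.
rewrite big_distrl /=; apply: eq_bigr => m _; rewrite big_distrl /=.
by apply: eq_bigr => n _.
Qed.

Lemma contract (Z : 'M[R]_4) i j :
  \sum_b (\sum_a E^T i a * (\sum_m \sum_n eps R a b m n * (E *m Z *m E^T) m n)) * E b j
  = \det E * \sum_k \sum_l eps R i j k l * Z k l.
Proof.
rewrite distr.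
under eq_bigr => l _ do under eq_bigr => k _ do rewrite epsML.
rewrite exchange_big big_distrr /=; apply: eq_bigr => k _.
rewrite big_distrr /=; apply: eq_bigr => l _; ring.
Qed.

Definition tm (T : tensor2 R) : 'M[R]_4 := \matrix_(a, b) T a b.
Definition hodgeE (Y : 'M[R]_4) : 'M[R]_4 :=
  \matrix_(i, j) (2^-1 * \sum_k \sum_l eps R i j k l * (Dm *m Y *m Dm) k l).

Lemma Gi_entry_sym a b : invmx g a b = invmx g b a.
Proof. by rewrite -{1}Gi_sym mxE. Qed.

Lemma hodge_entry U a b : hodge2 (ginv g) (vol g) U a b =
  2^-1 * (Num.sqrt (- \det g) *
    \sum_m \sum_n eps R a b m n * (invmx g *m tm U *m invmx g) m n).
Proof.
rewrite /hodge2 /vol /ginv; move: (eps R) => ep; congr (_ * _).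
rewrite big_distrr /=; apply: eq_bigr => m _; rewrite big_distrr /=; apply: eq_bigr => n _.
rewrite [(_ *m invmx g) m n]mxE !big_distrr /= exchange_big /=; apply: eq_bigr => n' _.
rewrite [(_ *m tm U) m n']mxE !big_distrl !big_distrr /=; apply: eq_bigr => m' _.
rewrite [tm U m' n']mxE (Gi_entry_sym n' n); ring.
Qed.

Lemma hodge_tr U :
  E^T *m tm (hodge2 (ginv g) (vol g) U) *m E = sig *: hodgeE (E^T *m tm U *m E).
Proof.
apply/matrixP => i j; rewrite [in RHS]mxE [hodgeE _ i j]mxE.
rewrite [LHS]mxE.
under eq_bigr => b _ do rewrite [(_ *m tm _) i b]mxE.
under eq_bigr => b _ do under eq_bigr => a _ do rewrite [tm _ a b]mxE hodge_entry Gi_E.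
set Z := Dm *m (E^T *m tm U *m E) *m Dm.
rewrite (_ : E *m Dm *m E^T *m tm U *m (E *m Dm *m E^T) = E *m Z *m E^T); last first.
  by rewrite /Z !mulmxA.
have key := contract Z i j; move: key; move: (eps R) => ep key.
rewrite (_ : \sum_b _ = 2^-1 * Num.sqrt (- \det g) * \sum_b
   (\sum_a E^T i a * (\sum_m \sum_n ep a b m n * (E *m Z *m E^T) m n)) * E b j).
  by rewrite key /sig; ring.
rewrite big_distrr /=; apply: eq_bigr => b _; rewrite !big_distrl !big_distrr /=.
by apply: eq_bigr => a _; ring.
Qed.

Definition fm (A : 'M[R]_4) : 'I_4 -> 'I_4 -> R := fun i j => A i j.

Lemma DYD (Y : 'M[R]_4) k l : (Dm *m Y *m Dm) k l = Dd R k * Y k l * Dd R l.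
Proof. by rewrite mul_diag_mx mul_mx_diag !mxE mulrC. Qed.

Lemma hodgeEX (Y : 'M[R]_4) i j : (forall a b, Y b a = - Y a b) ->
  hodgeE Y i j = hodgeX (fm Y) i j.
Proof.
move=> hY; rewrite mxE; under eq_bigr => k _ do under eq_bigr => l _ do rewrite DYD.
rewrite !sum4 !epsE.
have hY0 a : Y a a = 0 by have := hY a a; lra.
elim/ord4P: i; elim/ord4P: j; rewrite /epsv /Dd /hodgeX /fm /=; rewrite ?hY0;
  rewrite ?(hY i0 i1) ?(hY i0 i2) ?(hY i0 i3) ?(hY i1 i2) ?(hY i1 i3) ?(hY i2 i3); field; done.
Qed.

Lemma fmM (A B : 'M[R]_4) : fm (A *m B) = mulF (fm A) (fm B).
Proof.
apply: functional_extensionality => i; apply: functional_extensionality => j.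
by rewrite /fm mxE sum4.
Qed.

Lemma fmMD (A : 'M[R]_4) : fm (A *m Dm) = mD (fm A).
Proof.
apply: functional_extensionality => i; apply: functional_extensionality => j.
by rewrite /fm /mD mul_mx_diag !mxE.
Qed.

Lemma fmDM (A : 'M[R]_4) : fm (Dm *m A) = Dl (fm A).
Proof.
apply: functional_extensionality => i; apply: functional_extensionality => j.
by rewrite /fm /Dl mul_diag_mx !mxE.
Qed.

Lemma trfE (A : 'M[R]_4) : \tr A = trf (fm A).
Proof. by rewrite /mxtrace sum4. Qed.

Definition Tr (A : 'M[R]_4) := E^T *m A *m E.

Lemma TrM A B : Tr (A *m invmx g *m B) = Tr A *m Dm *m Tr B.
Proof. by rewrite /Tr Gi_E !mulmxA. Qed.

Lemma Tr_inj A B : Tr A = Tr B -> A = B.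
Proof.
rewrite /Tr => h.
have h2 : E^T *m A = E^T *m B.
  by rewrite -[LHS](mulmxK E_unit) h mulmxK // E_unit.
by rewrite -[A](mulKmx Et_unit) h2 mulKmx // Et_unit.
Qed.

Lemma TrZ c A : Tr (c *: A) = c *: Tr A.
Proof. by rewrite /Tr -scalemxAr -scalemxAl. Qed.

Lemma TrB A B : Tr (A - B) = Tr A - Tr B.
Proof. by rewrite /Tr mulmxBr mulmxBl. Qed.

Lemma Tr0 : Tr 0 = 0.
Proof. by rewrite /Tr mulmx0 mul0mx. Qed.

Lemma Trg : Tr g = Dm.
Proof. exact: hE. Qed.

Lemma trTr A B : \tr (invmx g *m A *m invmx g *m B) = \tr (Dm *m Tr A *m Dm *m Tr B).
Proof.
rewrite Gi_E /Tr -!mulmxA mxtrace_mulC -!mulmxA.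
by rewrite mxtrace_mulC -!mulmxA.
Qed.

Definition cov (u : 'I_4 -> R) : 'I_4 -> R := fun i => \sum_a E a i * u a.

Lemma Tr_wedge (U : tensor2 R) u v : (forall a b, U a b = u a * v b - u b * v a) ->
  fm (Tr (tm U)) = wedgef (cov u) (cov v).
Proof.
move=> hU; apply: functional_extensionality => i; apply: functional_extensionality => j.
rewrite /fm /Tr /wedgef /cov; do 3 rewrite ?mxE ?sum4; rewrite !hU; ring.
Qed.

Lemma DmE' i j : Dm i j = if i == j then Dd R i else 0.
Proof. by rewrite !mxE /Dd; case: (i == j); rewrite ?mulr1n ?mulr0n. Qed.

Lemma entryB (A B : 'M[R]_4) i j : (A - B) i j = A i j - B i j.
Proof. by rewrite !mxE. Qed.
Lemma entryZ c (A : 'M[R]_4) i j : (c *: A) i j = c * A i j.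
Proof. by rewrite !mxE. Qed.

Lemma fmADB (A B : 'M[R]_4) : fm (A *m Dm *m B) = mulF (mD (fm A)) (fm B).
Proof. by rewrite fmM fmMD. Qed.

Lemma sig_sq : sig * sig = 1.
Proof. by rewrite -expr2 sig2. Qed.

Lemma Tr_asym X : X^T = - X -> forall a b, Tr X b a = - Tr X a b.
Proof.
move=> hX a b; have : (Tr X)^T = - Tr X.
  by rewrite /Tr !trmx_mul trmxK hX mulNmx mulmxN mulmxA.
by move=> h; have := congr1 (fun M : 'M[R]_4 => M a b) h; rewrite !mxE.
Qed.

Section Simple.
Variables (U : tensor2 R) (u v : 'I_4 -> R).
Hypothesis hU : forall a b, U a b = u a * v b - u b * v a.
Let S := hodge2 (ginv g) (vol g) U.
Let Ut := Tr (tm U).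
Let W := wedgef (cov u) (cov v).

Lemma fmUt : fm Ut = W.
Proof. exact: Tr_wedge. Qed.

Lemma Ut_asym a b : Ut b a = - Ut a b.
Proof.
have := congr1 (fun f => f a b) fmUt; have := congr1 (fun f => f b a) fmUt.
rewrite /fm /W /wedgef => -> ->; ring.
Qed.

Lemma fmH : fm (hodgeE Ut) = hodgeX W.
Proof.
apply: functional_extensionality => i; apply: functional_extensionality => j.
by rewrite /fm hodgeEX ?fmUt //; apply: Ut_asym.
Qed.

Lemma TrS : Tr (tm S) = sig *: hodgeE Ut.
Proof. exact: hodge_tr. Qed.

Lemma G1 : tm U *m invmx g *m tm S = 0.
Proof.
apply: Tr_inj; rewrite TrM TrS Tr0 -scalemxAr.
suff -> : Ut *m Dm *m hodgeE Ut = 0 by rewrite scaler0.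
apply/matrixP => i j; rewrite [RHS]mxE.
transitivity (fm (Ut *m Dm *m hodgeE Ut) i j); first by [].
by rewrite fmM fmMD fmUt fmH G1f.
Qed.

Lemma G2 : tm U *m invmx g *m tm U - tm S *m invmx g *m tm S =
  (2^-1 * \tr (invmx g *m tm U *m invmx g *m tm U)) *: g.
Proof.
apply: Tr_inj; rewrite TrB !TrM TrS TrZ Trg trTr -/Ut.
rewrite -!scalemxAl -!scalemxAr !scalerA sig_sq scale1r.
apply/matrixP => i j; rewrite entryB entryZ DmE' trfE.
transitivity (fm (Ut *m Dm *m Ut) i j - fm (hodgeE Ut *m Dm *m hodgeE Ut) i j); first by [].
rewrite !fmADB ?fmDM fmUt fmH G2f //.
Qed.

Lemma G3 X : X^T = - X -> tm S *m invmx g *m X *m invmx g *m tm S =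
  (2^-1 * \tr (invmx g *m X *m invmx g *m tm S)) *: tm S.
Proof.
move=> hX; have hXt := Tr_asym hX.
apply: Tr_inj; rewrite !TrM TrS TrZ trTr -/Ut TrS.
rewrite -!scalemxAl -!scalemxAr !scalerA mxtraceZ.
apply/matrixP => i j; rewrite !entryZ trfE.
transitivity (sig * sig * fm (hodgeE Ut *m Dm *m Tr X *m Dm *m hodgeE Ut) i j); first by [].
rewrite !fmADB ?fmDM fmH; set W' := W.
have e := G3f (cov u) (cov v) i j hXt; rewrite /= -/W in e; rewrite e.
have -> : hodgeE Ut i j = hodgeX W i j by rewrite -fmH.
ring.
Qed.

Lemma G4 X : X^T = - X -> tm U *m invmx g *m X *m invmx g *m tm U =
  (2^-1 * \tr (invmx g *m X *m invmx g *m tm U)) *: tm U.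
Proof.
move=> hX; have hXt := Tr_asym hX.
apply: Tr_inj; rewrite !TrM TrZ trTr -/Ut.
apply/matrixP => i j; rewrite !entryZ trfE.
transitivity (fm (Ut *m Dm *m Tr X *m Dm *m Ut) i j); first by [].
rewrite !fmADB ?fmDM fmUt.
have e := G4f (cov u) (cov v) i j hXt; rewrite /= -/W in e; rewrite e.
have -> : Ut i j = W i j by rewrite -fmUt.
by [].
Qed.
End Simple.
End Gen.

Section Op.
Variable R : rcfType.
Notation M4 := ('M[R]_4).

Lemma opkey (M N M' N' : M4) (mu nu : R) :
  M *m N = 0 -> N *m M = 0 -> M *m M - N *m N = 1%:M ->
  M' *m N' = 0 -> M' *m M' - N' *m N' = 1%:M ->
  M' *m (M *m M) = (M *m M) *m M' ->
  M *m M' *m M = mu *: M -> N *m M' *m N = nu *: N ->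
  \tr (N *m N) != 0 -> M' = mu *: M.
Proof.
move=> hMN hNM hM hMN' hM' hc hmu hnu htr.
have MM : M *m M = N *m N + 1%:M by rewrite -hM addrC subrK.
have M'M' : M' *m M' = N' *m N' + 1%:M by rewrite -hM' addrC subrK.
have M3 : M *m M *m M = M.
  by rewrite -mulmxA MM mulmxDr mulmx1 mulmxA hMN mul0mx add0r.
have M'3 : M' *m M' *m M' = M'.
  by rewrite -mulmxA M'M' mulmxDr mulmx1 mulmxA hMN' mul0mx add0r.
have N3 : N *m N *m N = - N.
  have : N *m (M *m M) = 0 by rewrite mulmxA hNM mul0mx.
  by rewrite MM mulmxDr mulmx1 mulmxA => /eqP; rewrite addr_eq0 => /eqP.
have cNN : M' *m (N *m N) = (N *m N) *m M'.
  have : M' *m (M *m M - 1%:M) = (M *m M - 1%:M) *m M'.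
    by rewrite mulmxBr mulmxBl hc mulmx1 mul1mx.
  by rewrite MM addrK.
have e1 : M *m M *m M' = mu *: M.
  have -> : M *m M *m M' = M *m M *m M' *m (M *m M).
    rewrite -[X in _ = X]mulmxA hc [X in _ = X]mulmxA.
    by rewrite [M *m M *m (M *m M)]mulmxA M3.
  rewrite !mulmxA -[M *m M *m M' *m M]mulmxA -[M *m M *m (M' *m M)]mulmxA.
  by rewrite [M *m (M' *m M)]mulmxA hmu -scalemxAr -scalemxAl M3.
have NN2 : N *m N *m (N *m N) = - (N *m N) by rewrite mulmxA N3 mulNmx.
have e2 : N *m N *m M' = nu *: N.
  have h1 : N *m N *m M' *m (N *m N) = - (nu *: N).
    have -> : N *m N *m M' *m (N *m N) = N *m (N *m M' *m N) *m N by rewrite !mulmxA.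
    by rewrite hnu -scalemxAr -scalemxAl N3 scalerN.
  have -> : N *m N *m M' = - (N *m N *m (N *m N)) *m M' by rewrite NN2 opprK.
  by rewrite mulNmx -[N *m N *m (N *m N) *m M']mulmxA -cNN mulmxA h1 opprK.
have eM' : M' = mu *: M - nu *: N.
  by rewrite -[LHS]mul1mx -hM mulmxBl e1 e2.
have eM'N : M' *m N = - nu *: (N *m N).
  by rewrite eM' mulmxBl -!scalemxAl hMN scaler0 sub0r scaleNr.
have eM'NN : M' *m (N *m N) = nu *: N.
  by rewrite mulmxA eM'N -scalemxAl N3 scalerN scaleNr opprK.
have key : (nu ^+ 3 + nu) *: (N *m N) = 0.
  have : M' *m M' *m M' *m N = M' *m N by rewrite M'3.
  rewrite -!mulmxA eM'N -!scalemxAr eM'NN -scalemxAr eM'N !scalerA => /eqP.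
  rewrite -subr_eq0 -scalerBl => /eqP <-; congr (_ *: _); ring.
have nu0 : nu = 0.
  have := congr1 mxtrace key; rewrite mxtraceZ linear0 => /eqP.
  rewrite mulf_eq0 (negPf htr) orbF => /eqP h.
  have : nu * (nu ^+ 2 + 1) = 0 by rewrite -h; ring.
  move/eqP; rewrite mulf_eq0 => /orP[/eqP //|]; rewrite paddr_eq0 ?sqr_ge0 ?ler01 //.
  by rewrite oner_eq0 andbF.
by rewrite eM' nu0 scale0r subr0.
Qed.
End Op.


Section Main.
Variable R : rcfType.
Local Notation C := R[i].
Local Open Scope complex_scope.

Lemma cpx0 (A B : R) : A%:C - 'i * B%:C = 0 -> A = 0 /\ B = 0.
Proof.
rewrite /=; simpc; case=> -> /eqP; rewrite oppr_eq0 => /eqP ->; by [].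
Qed.

Lemma RCD (x y : R) : (x + y)%:C = x%:C + y%:C.
Proof. by rewrite rmorphD. Qed.
Lemma RCM (x y : R) : (x * y)%:C = x%:C * y%:C.
Proof. by rewrite rmorphM. Qed.

Definition Qm (g : 'M[R]_4) (Ric U : tensor2 R) : 'M[R]_4 := tm U *m invmx g *m tm Ric.

Lemma Qm_entry g Ric U n l :
  Qm g Ric U n l = \sum_m \sum_k invmx g m k * Ric k l * U n m.
Proof.
rewrite /Qm [in LHS]mxE [RHS]exchange_big; apply: eq_bigr => k _.
rewrite [in LHS]mxE big_distrl /=; apply: eq_bigr => m _; rewrite !mxE; ring.
Qed.

Definition k0 : C := ((Num.sqrt 2)%:C)^-1.
Definition cUf (g : 'M[R]_4) (U : tensor2 R) : tensor2 C := fun m n =>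
  k0 * ((U m n)%:C - 'i * (hodge2 (ginv g) (vol g) U m n)%:C).

Lemma RP_form g Ric W U' : typeD_data g W U' -> forall l n c d,
  RP_sym g Ric W l n c d =
  2^-1 * (3%:R * (- inv_b g W / inv_a g W)) * cUf g U' c d * k0 *
  ((Qm g Ric U' n l + Qm g Ric U' l n)%:C -
   'i * (Qm g Ric (hodge2 (ginv g) (vol g) U') n l +
         Qm g Ric (hodge2 (ginv g) (vol g) U') l n)%:C).
Proof.
rewrite /typeD_data /= => -[ha [hU' hW]] l n c d.
have hP p q : calP g W p q c d =
    3%:R * (- inv_b g W / inv_a g W) * cUf g U' p q * cUf g U' c d.
  by rewrite /calP hW /otimes2 /cUf /k0 /=; ring.
rewrite /RP_sym !Qm_entry; move: hP; rewrite /cUf /ginvC /ginv.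
move: (hodge2 (ginv g) (vol g) U') => S' hP.
rewrite !(@sum4 C) !(@sum4 R) !hP !(RCD, RCM).
ring.
Qed.

End Main.


Section Main2.
Variable R : rcfType.
Local Notation C := R[i].

Lemma entryD (A B : 'M[R]_4) i j : (A + B) i j = A i j + B i j.
Proof. by rewrite !mxE. Qed.

Lemma fsq_tm (g : 'M[R]_4) U a b : fsq (ginv g) U a b = (tm U *m invmx g *m tm U) a b.
Proof.
rewrite /fsq [in RHS]mxE exchange_big; apply: eq_bigr => n _.
rewrite [in RHS]mxE big_distrl /=; apply: eq_bigr => m _; rewrite !mxE /ginv; ring.
Qed.

Lemma em_mx (g : 'M[R]_4) Ric kappa U : em_data g Ric kappa U ->
  tm Ric = - kappa *: (tm U *m invmx g *m tm U +
    tm (hodge2 (ginv g) (vol g) U) *m invmx g *m tm (hodge2 (ginv g) (vol g) U)).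
Proof.
case=> _ [_ hR]; apply/matrixP => a b.
rewrite [LHS]mxE hR entryZ entryD -!fsq_tm; ring.
Qed.

Lemma simple_asym (U : tensor2 R) : simple2 U -> forall a b, U b a = - U a b.
Proof. by case=> u [v hU] a b; rewrite !hU; ring. Qed.

Lemma hodge_asym (g : 'M[R]_4) U a b :
  hodge2 (ginv g) (vol g) U b a = - hodge2 (ginv g) (vol g) U a b.
Proof.
have sw m n : eps R b a m n = - eps R a b m n by apply: eps_sw01.
rewrite /hodge2 /vol; move: sw; move: (eps R) (Num.sqrt (- \det g)) => ep sq sw.
rewrite -mulrN; congr (_ * _).
rewrite -sumrN; apply: eq_bigr => m _.
rewrite -sumrN; apply: eq_bigr => n _.
rewrite -sumrN; apply: eq_bigr => m' _.
rewrite -sumrN; apply: eq_bigr => n' _.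
rewrite sw; ring.
Qed.

Lemma hodge_lin (g : 'M[R]_4) U U' c : (forall a b, U' a b = c * U a b) ->
  forall a b, hodge2 (ginv g) (vol g) U' a b = c * hodge2 (ginv g) (vol g) U a b.
Proof.
move=> h a b; rewrite /hodge2 mulrCA; congr (_ * _); rewrite big_distrr; apply: eq_bigr => m _.
rewrite big_distrr; apply: eq_bigr => n _; rewrite big_distrr; apply: eq_bigr => m' _.
rewrite big_distrr; apply: eq_bigr => n' _; rewrite h /=; ring.
Qed.

Lemma tm_asym (U : tensor2 R) : (forall a b, U b a = - U a b) -> (tm U)^T = - tm U.
Proof. by move=> h; apply/matrixP => a b; rewrite !mxE h. Qed.

Lemma tm_sym (U : tensor2 R) : sym2 U -> (tm U)^T = tm U.
Proof. by move=> h; apply/matrixP => a b; rewrite !mxE h. Qed.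

Lemma Qm_comm (g : 'M[R]_4) Ric U : g^T = g -> sym2 Ric -> (forall a b, U b a = - U a b) ->
  forall n l, Qm g Ric U n l + Qm g Ric U l n =
    (tm U *m invmx g *m tm Ric - tm Ric *m invmx g *m tm U) n l.
Proof.
move=> gs hR hU n l; rewrite entryB; congr (_ + _).
have -> : Qm g Ric U l n = (Qm g Ric U)^T n l by rewrite [RHS]mxE.
rewrite /Qm !trmx_mul tm_sym // trmx_inv gs tm_asym // !mulmxN mulmxA.
by rewrite [LHS]mxE.
Qed.

Lemma ip2_tr (g : 'M[R]_4) U V : g^T = g -> (forall a b, V b a = - V a b) ->
  ip2 (ginv g) U V = - \tr (invmx g *m tm U *m invmx g *m tm V).
Proof.
move=> gs hV.
have Gs a b : invmx g b a = invmx g a b by rewrite -[in LHS]gs -trmx_inv mxE.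
have hV0 a : V a a = 0 by have := hV a a; lra.
rewrite /ip2 /mxtrace /ginv; do 6 rewrite ?mxE ?(@sum4 R).
rewrite ?hV0 ?(hV i0 i1) ?(hV i0 i2) ?(hV i0 i3) ?(hV i1 i2) ?(hV i1 i3) ?(hV i2 i3).
rewrite ?(Gs i0 i1) ?(Gs i0 i2) ?(Gs i0 i3) ?(Gs i1 i2) ?(Gs i1 i3) ?(Gs i2 i3).
ring.
Qed.
End Main2.


Section Main3.
Variable R : rcfType.
Notation Dm := (diag_mx (\row_(i < 4) (if i == ord0 then -1 else 1)) : 'M[R]_4).

Section Facts.
Variables (g E : 'M[R]_4).
Hypothesis gsym : g^T = g.
Hypothesis hE : E^T *m g *m E = Dm.
Variable U : tensor2 R.
Hypothesis hU : timelike_unit2 g U.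
Let Gi := invmx g.
Let S := hodge2 (ginv g) (vol g) U.
Let M := Gi *m tm U.
Let N := Gi *m tm S.

Lemma U_asym a b : U b a = - U a b.
Proof. by case: hU => hs _; apply: simple_asym. Qed.

Lemma trUU : \tr (Gi *m tm U *m Gi *m tm U) = 2%:R.
Proof.
case: hU => _ hip; move: hip; rewrite ip2_tr //; last exact: U_asym.
by move=> h; apply/eqP; rewrite -eqr_opp h.
Qed.

Lemma UGS : tm U *m Gi *m tm S = 0.
Proof. by case: hU => [[u [v hu]] _]; exact: (G1 gsym hE hu). Qed.

Lemma SGU : tm S *m Gi *m tm U = 0.
Proof.
have := congr1 trmx UGS; rewrite !trmx_mul trmx0 (@tm_asym _ U U_asym).
rewrite (@tm_asym _ S (fun a b => hodge_asym g U a b)).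
by rewrite trmx_inv gsym mulmxN mulNmx mulmxN opprK mulmxA.
Qed.

Lemma UGU_SGS : tm U *m Gi *m tm U - tm S *m Gi *m tm S = g.
Proof.
case: hU => [[u [v hu]] _]; rewrite (G2 gsym hE hu) -/Gi trUU.
by rewrite mulVf ?pnatr_eq0 // scale1r.
Qed.

Lemma MN0 : M *m N = 0.
Proof.
have -> : M *m N = Gi *m (tm U *m Gi *m tm S) by rewrite /M /N !mulmxA.
by rewrite UGS mulmx0.
Qed.

Lemma NM0 : N *m M = 0.
Proof.
have -> : N *m M = Gi *m (tm S *m Gi *m tm U) by rewrite /M /N !mulmxA.
by rewrite SGU mulmx0.
Qed.

Lemma MMNN : M *m M - N *m N = 1%:M.
Proof.
have -> : M *m M - N *m N = Gi *m (tm U *m Gi *m tm U - tm S *m Gi *m tm S).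
  by rewrite mulmxBr /M /N !mulmxA.
by rewrite UGU_SGS mulVmx // (g_unit hE).
Qed.

Lemma trNN : \tr (N *m N) != 0.
Proof.
have -> : N *m N = M *m M - 1%:M by rewrite -MMNN opprB addrC subrK.
rewrite linearB /= mxtrace1.
have -> : M *m M = Gi *m tm U *m Gi *m tm U by rewrite /M !mulmxA.
rewrite trUU; apply/eqP => h.
have : (2%:R : R) - 4%:R = 0 by rewrite -h.
by move/eqP; rewrite subr_eq0 eqr_nat.
Qed.

Lemma G4U (X : 'M[R]_4) : X^T = - X ->
  M *m (Gi *m X) *m M = (2^-1 * \tr (Gi *m X *m Gi *m tm U)) *: M.
Proof.
case: hU => [[u [v hu]] _] hX.
have -> : M *m (Gi *m X) *m M = Gi *m (tm U *m Gi *m X *m Gi *m tm U) by rewrite /M !mulmxA.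
by rewrite (G4 hE hu hX) -scalemxAr.
Qed.

Lemma G3U (X : 'M[R]_4) : X^T = - X ->
  N *m (Gi *m X) *m N = (2^-1 * \tr (Gi *m X *m Gi *m tm S)) *: N.
Proof.
case: hU => [[u [v hu]] _] hX.
have -> : N *m (Gi *m X) *m N = Gi *m (tm S *m Gi *m X *m Gi *m tm S) by rewrite /N !mulmxA.
by rewrite (G3 gsym hE hu hX) -scalemxAr.
Qed.
End Facts.
Lemma bwd_core (g E : 'M[R]_4) (gsym : g^T = g) (hE : E^T *m g *m E = Dm)
  Ric kappa U U' : em_data g Ric kappa U -> timelike_unit2 g U' ->
  tm U' *m invmx g *m tm Ric = tm Ric *m invmx g *m tm U' ->
  exists2 mu, mu != 0 & forall a b, U' a b = mu * U a b.
Proof.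
move=> hem hU' hc.
have hU : timelike_unit2 g U by case: hem => _ [].
have hk : kappa != 0 by case: hem => k0 _; rewrite gt_eqF.
have hR := em_mx hem.
set Gi := invmx g.
set M := Gi *m tm U; set N := Gi *m tm (hodge2 (ginv g) (vol g) U).
set M' := Gi *m tm U'; set N' := Gi *m tm (hodge2 (ginv g) (vol g) U').
have GR : Gi *m tm Ric = - kappa *: (M *m M + N *m N).
  by rewrite hR -scalemxAr mulmxDr /M /N !mulmxA.
have hc' : M' *m (M *m M + N *m N) = (M *m M + N *m N) *m M'.
  have : M' *m (Gi *m tm Ric) = (Gi *m tm Ric) *m M'.
    have -> : M' *m (Gi *m tm Ric) = Gi *m (tm U' *m Gi *m tm Ric) by rewrite /M' !mulmxA.
    have -> : Gi *m tm Ric *m M' = Gi *m (tm Ric *m Gi *m tm U') by rewrite /M' !mulmxA.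
    by rewrite hc.
  rewrite GR -scalemxAr -scalemxAl; apply: scalerI; by rewrite oppr_eq0.
have hcomm : M' *m (M *m M) = (M *m M) *m M'.
  have NN : N *m N = M *m M - 1%:M by rewrite -(MMNN gsym hE hU) opprB addrC subrK.
  move: hc'; rewrite NN mulmxDr mulmxBr mulmx1 mulmxDl mulmxBl mul1mx !addrA.
  move/(congr1 (fun X => X + M')); rewrite !subrK -!mulr2n -!scaler_nat.
  by apply: scalerI; rewrite pnatr_eq0.
have hX : (tm U')^T = - tm U' by apply: tm_asym; apply: U_asym hU'.
have := opkey (MN0 gsym hE hU) (NM0 gsym hE hU) (MMNN gsym hE hU)
  (MN0 gsym hE hU') (MMNN gsym hE hU') hcomm (G4U hE hU hX) (G3U gsym hE hU hX)
  (trNN gsym hE hU).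
set mu := 2^-1 * _ => hM'.
have hUU : tm U' = mu *: tm U.
  have : g *m M' = g *m (mu *: M) by rewrite /M' hM'.
  by rewrite /M' /M /Gi -scalemxAr !mulKVmx // (g_unit hE).
exists mu.
  apply/eqP => mu0; have := trUU gsym hU'; rewrite -/Gi hUU mu0 scale0r.
  rewrite mulmx0 mxtrace0 => /eqP; by rewrite eq_sym pnatr_eq0.
by move=> a b; have := congr1 (fun X : 'M[R]_4 => X a b) hUU; rewrite /= !mxE.
Qed.
End Main3.


Section Main4.
Variable R : rcfType.
Notation Dm := (diag_mx (\row_(i < 4) (if i == ord0 then -1 else 1)) : 'M[R]_4).

Lemma pluck (U U' : tensor2 R) u v u' v' p q :
  (forall a b, U a b = u a * v b - u b * v a) ->
  (forall a b, U' a b = u' a * v' b - u' b * v' a) ->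
  (forall a b c, u' a * U b c + u' b * U c a + u' c * U a b = 0) ->
  (forall a b c, v' a * U b c + v' b * U c a + v' c * U a b = 0) ->
  U p q != 0 ->
  forall a b, U' a b = ((u' p * v' q - u' q * v' p) / U p q) * U a b.
Proof.
move=> hU hU' hu hv hpq a b.
have eu x : u' x = - (u' p * U q x + u' q * U x p) / U p q.
  apply: (mulIf hpq); rewrite divfK //; apply/eqP; rewrite -subr_eq0 -(hu x p q); apply/eqP; ring.
have ev x : v' x = - (v' p * U q x + v' q * U x p) / U p q.
  apply: (mulIf hpq); rewrite divfK //; apply/eqP; rewrite -subr_eq0 -(hv x p q); apply/eqP; ring.
rewrite hU' (eu a) (eu b) (ev a) (ev b).
move: hpq; rewrite !hU => hpq; field; exact: hpq.
Qed.

Lemma gGi_cov (g E : 'M[R]_4) (hE : E^T *m g *m E = Dm) (w : 'I_4 -> R) a :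
  \sum_m g a m * (\sum_n invmx g m n * w n) = w a.
Proof.
rewrite (eq_bigr (fun m => \sum_n g a m * (invmx g m n * w n))); last first.
  by move=> m _; rewrite big_distrr.
rewrite exchange_big /=.
transitivity (\sum_n (g *m invmx g) a n * w n).
  apply: eq_bigr => n _; rewrite mxE big_distrl /=; apply: eq_bigr => m _; ring.
rewrite mulmxV ?(g_unit hE) //.
under eq_bigr => n _ do rewrite mxE eq_sym.
exact: delta4.
Qed.

Lemma plane_cov (g E : 'M[R]_4) (hE : E^T *m g *m E = Dm) (U U' : tensor2 R) u' v' :
  (forall a b, U' a b = u' a * v' b - u' b * v' a) ->
  (forall x, plane_of g U' x -> plane_of g U x) ->
  (forall a b c, u' a * U b c + u' b * U c a + u' c * U a b = 0) /\ (forall a b c, v' a * U b c + v' b * U c a + v' c * U a b = 0).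
Proof.
move=> hU' hpl.
have gen (w : 'I_4 -> R) : (forall a b c, w a * U' b c + w b * U' c a + w c * U' a b = 0) ->
    forall a b c, w a * U b c + w b * U c a + w c * U a b = 0.
  move=> hw a b c.
  have := hpl (fun m => \sum_n invmx g m n * w n); rewrite /plane_of /= => H.
  have := H _ a b c; rewrite !(gGi_cov hE); apply => a' b' c'.
  by rewrite !(gGi_cov hE).
split; apply: gen => a b c; rewrite !hU'; ring.
Qed.

Lemma nz_entry (g : 'M[R]_4) (gsym : g^T = g) U : timelike_unit2 g U ->
  exists p q, U p q != 0.
Proof.
move=> hU; case: (boolP [exists p : 'I_4, exists q : 'I_4, U p q != 0]).
  by case/existsP => p /existsP [q h]; exists p, q.
rewrite negb_exists => /forallP h.
have h0 : tm U = 0.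
  apply/matrixP => a b; move: (h a); rewrite negb_exists => /forallP/(_ b).
  by rewrite negbK !mxE => /eqP.
have := trUU gsym hU; rewrite h0 mulmx0 mxtrace0 => /eqP.
by rewrite eq_sym pnatr_eq0.
Qed.

Lemma comm_U (g E : 'M[R]_4) (gsym : g^T = g) (hE : E^T *m g *m E = Dm) Ric kappa U :
  em_data g Ric kappa U ->
  tm U *m invmx g *m tm Ric = tm Ric *m invmx g *m tm U /\ tm (hodge2 (ginv g) (vol g) U) *m invmx g *m tm Ric =
  tm Ric *m invmx g *m tm (hodge2 (ginv g) (vol g) U).
Proof.
move=> hem; have hU : timelike_unit2 g U by case: hem => _ [].
have z1 := UGS gsym hE hU; have z2 := SGU gsym hE hU.
rewrite (em_mx hem); move: z1 z2.
move: (tm U) (tm (hodge2 (ginv g) (vol g) U)) (invmx g) => A B G z1 z2.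
split; rewrite -scalemxAr -!scalemxAl; congr (_ *: _); rewrite mulmxDr !mulmxDl.
- have -> : A *m G *m (B *m G *m B) = 0 by rewrite !mulmxA z1 !mul0mx.
  have -> : B *m G *m B *m G *m A = 0.
    have -> : B *m G *m B *m G *m A = B *m G *m (B *m G *m A) by rewrite !mulmxA.
    by rewrite z2 mulmx0.
  by rewrite !addr0 !mulmxA.
- have -> : B *m G *m (A *m G *m A) = 0 by rewrite !mulmxA z2 !mul0mx.
  have -> : A *m G *m A *m G *m B = 0.
    have -> : A *m G *m A *m G *m B = A *m G *m (A *m G *m B) by rewrite !mulmxA.
    by rewrite z1 mulmx0.
  by rewrite !add0r !mulmxA.
Qed.
End Main4.

Section Main5.
Variable R : rcfType.
Local Notation C := R[i].
Local Open Scope complex_scope.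
Notation Dm := (diag_mx (\row_(i < 4) (if i == ord0 then -1 else 1)) : 'M[R]_4).

Lemma RC0 (x : R) : x%:C = 0 -> x = 0.
Proof. by move=> h; apply: complexI; exact: h. Qed.

Lemma k0_neq0 : k0 R != 0.
Proof.
rewrite /k0 invr_eq0; apply/eqP => /RC0/eqP; rewrite sqrtr_eq0 => h.
by have : (2 : R) <= 0 := h; lra.
Qed.

Lemma cUf_neq0 (g : 'M[R]_4) U c d : U c d != 0 -> cUf g U c d != 0.
Proof.
move=> hU; rewrite /cUf mulf_eq0 negb_or k0_neq0 /=.
by apply/eqP => /cpx0 [h _]; move: hU; rewrite h eqxx.
Qed.

Lemma inv_a_zero (g : 'M[R]_4) W : (forall p q r s, selfdual g W p q r s = 0) -> inv_a g W = 0.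
Proof.
move=> h0; have e : selfdual g W = (fun _ _ _ _ => 0).
  do 4 apply: functional_extensionality => ?; exact: h0.
have dz a b r s : dcomp (ginvC g) (fun _ _ _ _ => 0 : C) (fun _ _ _ _ => 0) a b r s = 0.
  rewrite /dcomp big1 ?mulr0 // => m _; rewrite big1 // => n _; rewrite big1 // => m' _.
  by rewrite big1 // => n' _; rewrite !mul0r.
rewrite /inv_a e /dtr big1 ?mulr0 // => a _; rewrite big1 // => b _; rewrite big1 // => a' _.
by rewrite big1 // => b' _; rewrite dz mulr0.
Qed.

Lemma rho_neq0 (g : 'M[R]_4) W U' : typeD_data g W U' -> - inv_b g W / inv_a g W != 0.
Proof.
rewrite /typeD_data /= => -[ha [_ hW]]; apply/eqP => h0.
suff : inv_a g W = 0 by move/eqP; rewrite (negPf ha).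
by apply: inv_a_zero => p q r s; rewrite hW h0; ring.
Qed.

Lemma fwd_core (g E : 'M[R]_4) (gsym : g^T = g) (hE : E^T *m g *m E = Dm) Ric kappa U U' :
  em_data g Ric kappa U -> timelike_unit2 g U' ->
  (forall x, plane_of g U x <-> plane_of g U' x) ->
  tm U' *m invmx g *m tm Ric = tm Ric *m invmx g *m tm U' /\ tm (hodge2 (ginv g) (vol g) U') *m invmx g *m tm Ric =
  tm Ric *m invmx g *m tm (hodge2 (ginv g) (vol g) U').
Proof.
move=> hem hU' hpl.
have hU : timelike_unit2 g U by case: hem => _ [].
case: (hU) => [[u [v hu]] _]; case: (hU') => [[u' [v' hu']] _].
have [hcu hcv] := plane_cov hE hu' (fun x => (hpl x).2).
have [p [q hpq]] := nz_entry gsym hU.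
have hc := pluck hu hu' hcu hcv hpq.
move: hc; set c := (_ / U p q) => hc.
have hUU : tm U' = c *: tm U by apply/matrixP => a b; rewrite [LHS]mxE entryZ [tm U a b]mxE hc.
have hSS : tm (hodge2 (ginv g) (vol g) U') = c *: tm (hodge2 (ginv g) (vol g) U).
  apply/matrixP => a b; rewrite [LHS]mxE entryZ [tm _ a b]mxE.
  exact: hodge_lin.
have [h1 h2] := comm_U gsym hE hem.
by rewrite hUU hSS; split; rewrite -!scalemxAl -scalemxAr ?h1 ?h2.
Qed.
End Main5.


Lemma entry0 (R : rcfType) i j : (0 : 'M[R]_4) i j = 0.
Proof. by rewrite mxE. Qed.

Theorem lemma4 (R : rcfType) (g : 'M[R]_4) (Ric : tensor2 R) (W : tensor4 R) :
  lorentzian g -> sym2 Ric -> weyl_alg g W ->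
  nonnull_em g Ric -> typeD g W ->
  (aligned g Ric W <->
   (inv_a g W != 0 /\ forall l n c d, RP_sym g Ric W l n c d = 0)).
Proof.
move=> [gsym [E hE]] hRs _ [kappa [U hem]] [U' htd].
split.
- case=> k1 [U1 [U1' [hem1 [htd1 [hpl _]]]]].
  split; first by case: htd1.
  have hU1' : timelike_unit2 g U1' by case: htd1 => _ [].
  have [cU cS] := fwd_core gsym hE hem1 hU1' hpl.
  move=> l n c d; rewrite (RP_form Ric htd1).
  rewrite (Qm_comm gsym hRs (U_asym hU1')).
  rewrite (Qm_comm gsym hRs (fun a b => hodge_asym g U1' a b)).
  rewrite cU cS !subrr !entry0.
  by rewrite (_ : ((0 : R)%:C)%C = 0) // mulr0 subr0 mulr0.
- case=> ha hRP; exists kappa, U, U'.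
  have hU' : timelike_unit2 g U' by case: htd => _ [].
  have [c [d hcd]] := nz_entry gsym hU'.
  have hK : 2^-1 * (3%:R * (- inv_b g W / inv_a g W)) * cUf g U' c d * k0 R != 0.
    have h2 : (2^-1 : R[i]) != 0 by rewrite invr_eq0 pnatr_eq0.
    have h3 : (3%:R : R[i]) != 0 by rewrite pnatr_eq0.
    apply: mulf_neq0; last exact: k0_neq0.
    apply: mulf_neq0; last exact: cUf_neq0.
    apply: mulf_neq0 => //; apply: mulf_neq0 => //; exact: rho_neq0 htd.
  have hA l n : Qm g Ric U' n l + Qm g Ric U' l n = 0.
    have := hRP l n c d; rewrite (RP_form Ric htd) => /eqP.
    by rewrite mulf_eq0 (negPf hK) /= => /eqP /cpx0 [].
  have hcomm : tm U' *m invmx g *m tm Ric = tm Ric *m invmx g *m tm U'.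
    apply/eqP; rewrite -subr_eq0; apply/eqP/matrixP => n l.
    by rewrite entry0 -(Qm_comm gsym hRs (U_asym hU')) hA.
  have [mu mu0 hmu] := bwd_core gsym hE hem hU' hcomm.
  have hpl : forall x, plane_of g U x <-> plane_of g U' x.
    move=> x; rewrite /plane_of /=; split => H a b c0.
    + rewrite !hmu; have h := H a b c0; move: h; set X := (X in X = 0) => h.
      by transitivity (mu * X); [rewrite /X; ring | rewrite h mulr0].
    + have := H a b c0; rewrite !hmu => h.
      set X := (X in X = 0).
      have : mu * X = 0 by rewrite -h /X; ring.
      by move/eqP; rewrite mulf_eq0 (negPf mu0) => /eqP.
  split; first exact: hem.
  split; first exact: htd.
  split; first exact: hpl.
  move=> x; rewrite /orth; split => H y Py; apply: H; by apply/hpl.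
Qed.
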